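(* Let $r\ge 0$, $k\ge r$ and $t>r+1$ be integers, and let $\Omega=\lfloor tr/(t-1)\rfloor+1$, $a=t(r+1)+(1-t)\Omega$, $b=t-1-a$. Then \[t\binom{k+2-(r+1)}{2}-b\binom{k+2-\Omega}{2}-a\binom{k+2-(\Omega+1)}{2}=\binom{k+2}{2}-\binom{r+2}{2}-\sum_{j=1}^{k-r}(r+j+1-j\,t)_+ .\]
   Context: $(x)_+=\max(x,0)$; an empty sum is $0$. Binomial coefficients follow the convention $\binom{m}{2}=m(m-1)/2$ for integers $m\ge 2$ and $\binom{m}{2}=0$ for $m<2$. *)

(* Defs.v *)
From mathcomp Require Import all_boot all_order all_algebra.
Import Order.TTheory GRing.Theory Num.Theory.
Local Open Scope ring_scope.

Definition binom2 (m : int) : int :=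
  if (2 <= m)%R then ((m * (m - 1)) %/ 2)%Z else 0.

Definition posp (x : int) : int := Num.max x 0.

(* Main.v *)
Require Import Defs.
From mathcomp Require Import all_boot all_order all_algebra.
From mathcomp Require Import zify ring lra.
Import Order.TTheory GRing.Theory Num.Theory.
Local Open Scope ring_scope.

Lemma binom2E (n : int) : 0 <= n -> 2 * binom2 n = n * (n - 1).
Proof.
move=> hn; rewrite /binom2; case: ifP => h2; last first.
  have : n = 0 \/ n = 1 by lia.
  by case=> ->.
have he := divz_eq n 2.
have hm0 : 0 <= (n %% 2)%Z by apply: modz_ge0.
have hm1 : (n %% 2)%Z < 2 by apply: (@ltz_pmod n 2).
set q := (n %/ 2)%Z in he; set e := (n %% 2)%Z in he hm0 hm1.
have [E|E] : e = 0 \/ e = 1 by lia.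
- have -> : n * (n - 1) = 2 * (q * (2 * q - 1)) by rewrite he E; ring.
  by rewrite mulKz.
- have -> : n * (n - 1) = 2 * (q * (2 * q + 1)) by rewrite he E; ring.
  by rewrite mulKz.
Qed.

Theorem lemma4p3 (r k t : int) (hr : 0 <= r) (hk : r <= k) (ht : r + 1 < t) :
  let Omega : int := ((t * r) %/ (t - 1))%Z + 1 in
  let a : int := t * (r + 1) + (1 - t) * Omega in
  let b : int := t - 1 - a in
  t * binom2 (k + 2 - (r + 1)) - b * binom2 (k + 2 - Omega)
    - a * binom2 (k + 2 - (Omega + 1))
  = binom2 (k + 2) - binom2 (r + 2)
    - \sum_(1 <= j < `|k - r|%N.+1) posp (r + j%:Z + 1 - j%:Z * t).
Proof.
have hq : ((t * r) %/ (t - 1))%Z = r.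
  have -> : t * r = r * (t - 1) + r by ring.
  rewrite divzMDl; last by apply/eqP; lia.
  rewrite divz_small ?addr0 //; apply/andP; split => //; lia.
move=> Omega a b.
have hO : Omega = r + 1 by rewrite /Omega hq.
have ha : a = r + 1 by rewrite /a hO; ring.
have hb : b = t - r - 2 by rewrite /b ha; ring.
have -> : \sum_(1 <= j < `|k - r|%N.+1) posp (r + j%:Z + 1 - j%:Z * t) = 0.
  rewrite big_nat_cond big1 // => j /andP[/andP[hj1 _] _].
  rewrite /posp; apply/eqP; rewrite eq_le; apply/andP; split.
    rewrite ge_max lexx andbT; nia.
  by rewrite le_max lexx orbT.
rewrite hO ha hb.
have h1 := binom2E (k + 2 - (r + 1)) ltac:(lia).
have h2 := binom2E (k + 2 - (r + 1 + 1)) ltac:(lia).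
have h3 := binom2E (k + 2) ltac:(lia).
have h4 := binom2E (r + 2) ltac:(lia).
apply: (@mulfI _ 2) => //.
rewrite !mulrBr !mulrA ![2 * t]mulrC ![2 * (_ - _)]mulrC ![2 * (r + 1)]mulrC.
rewrite -!mulrA h1 h2 h3 h4 subr0.
ring.
Qed.
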